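(* Let $p\in(0,1)$ and $0<\alpha<\frac{p}{1-p}$. Let $E:\mathbb{R}_{\ge0}\to\mathbb{R}_{\ge0}$ satisfy: (i) $E$ is a proper error score; (ii) the limits $\lim_{x\to\infty}\frac{E'(x)}{E(x)}$, $\lim_{x\to\infty}\frac{E(x)}{E(ax)}$ and $\lim_{x\to\infty}\frac{E'(x)}{E'(ax)}$ exist (in the extended reals) for every $a\in(0,1)$; (iii) $-\log E(x)\in\omega(\log x)$ as $x\to\infty$, i.e. $\frac{-\log E(x)}{\log x}\to\infty$. Then $E$ is undulating (with respect to $p,\alpha$).
   Context: A proper error score is a function $E:\mathbb{R}_{\ge0}\to\mathbb{R}_{\ge0}$ that is twice differentiable, with $E(x)>0$ and $E'(x)<0$ for all $x\ge0$, $E(0)=c_0>0$, and $\lim_{x\to\infty}E(x)=0$. Given $p\in(0,1)$ and $0<\alpha<\frac{p}{1-p}$, an error score $E$ is undulating if there exist $z_1,z_2\in\mathbb{R}$ such that $\frac{E'(pm)}{E'(\alpha(1-p)m)}>\frac{\alpha(1-p)}{p}$ for all $m\ge 0$ with $m<z_1$, and $\frac{E'(pm)}{E'(\alpha(1-p)m)}<\frac{\alpha(1-p)}{p}$ for all $m>z_2$. *)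

(* Defs.v *)
From Stdlib Require Import Reals.
From Coquelicot Require Import Coquelicot.
Open Scope R_scope.

Definition is_deriv_nonneg (f f' : R -> R) : Prop :=
  forall x, 0 <= x ->
    filterlim (fun y => (f y - f x) / (y - x))
      (within (fun y => 0 <= y /\ y <> x) (locally x)) (locally (f' x)).

Definition proper_error_score (E E' : R -> R) : Prop :=
  is_deriv_nonneg E E' /\
  (exists E'' : R -> R, is_deriv_nonneg E' E'') /\
  (forall x, 0 <= x -> 0 < E x) /\
  (forall x, 0 <= x -> E' x < 0) /\
  0 < E 0 /\
  filterlim E (Rbar_locally p_infty) (locally 0).

Definition undulating (p alpha : R) (E' : R -> R) : Prop :=
  exists z1 z2 : R,
    (forall m, 0 <= m -> m < z1 ->
       E' (p * m) / E' (alpha * (1 - p) * m) > alpha * (1 - p) / p) /\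
    (forall m, 0 <= m -> z2 < m ->
       E' (p * m) / E' (alpha * (1 - p) * m) < alpha * (1 - p) / p).

Definition ex_lim_pinfty_Rbar (g : R -> R) : Prop :=
  exists l : Rbar, filterlim g (Rbar_locally p_infty) (Rbar_locally l).

(* Main.v *)
Require Import Defs.
From Stdlib Require Import Reals Lra Lia.
From Coquelicot Require Import Coquelicot.
Open Scope R_scope.

Lemma ballR (x e y : R) : @ball R_UniformSpace x e y <-> Rabs (y - x) < e.
Proof. unfold ball; simpl. unfold AbsRing_ball; simpl. unfold abs, minus, plus, opp; simpl. tauto. Qed.

Lemma deriv_pos (f f' : R -> R) x : is_deriv_nonneg f f' -> 0 < x -> derivable_pt_lim f x (f' x).
Proof.
  intros Hd Hx eps Heps.
  pose proof (Hd x (Rlt_le _ _ Hx) (ball (f' x) (mkposreal eps Heps)) (locally_ball _ _)) as H.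
  destruct H as [d Hd'].
  assert (Hm : 0 < Rmin d x) by (apply Rmin_pos; [apply cond_pos | lra]).
  exists (mkposreal _ Hm). intros h hne hlt. simpl in hlt.
  assert (B : ball x d (x + h)) by (apply ballR; replace (x + h - x) with h by ring;
    apply Rlt_le_trans with (1 := hlt); apply Rmin_l).
  specialize (Hd' _ B).
  assert (h1 : Rabs h < x) by (apply Rlt_le_trans with (1 := hlt); apply Rmin_r).
  assert (0 <= x + h) by (apply Rabs_lt_between in h1; lra).
  assert (Hne : x + h <> x) by (intro e; apply hne; lra).
  specialize (Hd' (conj H Hne)).
  apply ballR in Hd'. simpl in Hd'. replace (x + h - x) with h in Hd' by ring. exact Hd'.
Qed.

Lemma decr (f df : R -> R) a : (forall x, a <= x -> derivable_pt_lim f x (df x)) ->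
  (forall x, a <= x -> df x <= 0) -> forall x y, a <= x -> x <= y -> f y <= f x.
Proof.
  intros Hd Hn x y Hx Hxy.
  destruct (MVT_gen f x y df) as [c [Hc Heq]].
  - intros z Hz. rewrite Rmin_left in Hz by lra. apply is_derive_Reals, Hd. lra.
  - intros z Hz. rewrite Rmin_left in Hz by lra. apply derivable_continuous_pt.
    exists (df z). apply Hd. lra.
  - rewrite Rmin_left in Hc by lra. rewrite Rmax_right in Hc by lra.
    assert (df c * (y - x) <= 0). { apply Rmult_le_0_r; [apply Hn; lra | lra]. }
    lra.
Qed.

Lemma lim0 (E : R -> R) : filterlim E (Rbar_locally p_infty) (locally 0) ->
  forall eps, 0 < eps -> exists M, forall s, M < s -> Rabs (E s) < eps.
Proof.
  intros H eps He.
  destruct (proj1 (filterlim_locally _ _) H (mkposreal eps He)) as [M HM].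
  exists M. intros s Hs. specialize (HM s Hs). apply (proj1 (ballR _ _ _)) in HM.
  replace (E s - 0) with (E s) in HM by ring. exact HM.
Qed.

Lemma key (E E' : R -> R) (beta c X : R) : proper_error_score E E' ->
  0 < beta < 1 -> 0 < c ->
  (forall t, X < t -> E' t / E' (beta * t) > c) ->
  exists X', 0 < X' /\ forall t, X' <= t -> (c / beta) * E (beta * t) <= E t.
Proof.
  intros [Hd [_ [Hpos [Hneg [_ Hlim]]]]] Hb Hc Hr.
  set (X' := Rmax X 1 + 1).
  assert (HX1 : X < X') by (unfold X'; pose proof (Rmax_l X 1); lra).
  assert (HX2 : 1 < X') by (unfold X'; pose proof (Rmax_r X 1); lra).
  exists X'. split; [lra|].
  set (h := fun t => E t - (c / beta) * E (beta * t)).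
  assert (Hdh : forall t, X' <= t -> derivable_pt_lim h t (E' t - c * E' (beta * t))).
  { intros t Ht. apply is_derive_Reals.
    assert (D1 : is_derive E t (E' t)) by (apply is_derive_Reals, deriv_pos; auto; lra).
    assert (D2 : is_derive E (beta * t) (E' (beta * t))).
    { apply is_derive_Reals, deriv_pos; auto. apply Rmult_lt_0_compat; lra. }
    assert (D3 : is_derive (fun s => beta * s) t beta).
    { auto_derive; auto; ring. }
    pose proof (is_derive_comp E (fun s => beta * s) t _ _ D2 D3) as D4.
    pose proof (is_derive_scal _ t (c / beta) _ D4) as D5.
    pose proof (is_derive_minus _ _ t _ _ D1 D5) as D6.
    replace (E' t - c * E' (beta*t)) with (minus (E' t) (c/beta * scal beta (E' (beta*t)))).
    2: { unfold minus, plus, opp, scal; simpl; unfold mult; simpl. field; lra. }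
    eapply is_derive_ext; [|exact D6]. intros s; unfold h, minus, plus, opp; simpl; ring. }
  assert (Hdn : forall t, X' <= t -> E' t - c * E' (beta*t) <= 0).
  { intros t Ht. pose proof (Hr t ltac:(lra)) as Hrt.
    assert (Hn: E' (beta*t) < 0) by (apply Hneg; nra).
    assert (E' t = (E' t / E' (beta*t)) * E'(beta*t)) by (field; lra). nra. }
  pose proof (decr h _ X' Hdh Hdn) as Hmono.
  intros t Ht. destruct (Rle_or_lt 0 (h t)) as [H0|H0]; [unfold h in H0; lra|exfalso].
  set (eps := - h t * beta / c / 2).
  assert (Heps : 0 < eps).
  { unfold eps, Rdiv. apply Rmult_lt_0_compat; [apply Rmult_lt_0_compat; [nra| apply Rinv_0_lt_compat; lra]| lra]. }
  destruct (lim0 E Hlim eps Heps) as [M HM].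
  set (s := Rmax t (M/beta) + 1).
  assert (Hs1 : t <= s) by (unfold s; pose proof (Rmax_l t (M/beta)); lra).
  assert (Hs2 : M < beta * s).
  { unfold s; pose proof (Rmax_r t (M/beta)).
    assert (beta * (M/beta) = M) by (field; lra). nra. }
  specialize (Hmono t s Ht Hs1). specialize (HM _ Hs2).
  apply Rabs_lt_between in HM.
  assert (HEs : 0 < E s) by (apply Hpos; lra).
  assert (Hce : c / beta * eps = - h t / 2) by (unfold eps; field; lra).
  assert (c / beta * E (beta * s) < c / beta * eps).
  { apply Rmult_lt_compat_l; [|lra]. unfold Rdiv; apply Rmult_lt_0_compat; [lra| apply Rinv_0_lt_compat; lra]. }
  unfold h at 1 in Hmono. lra.
Qed.

Lemma lnle x y : 0 < x -> x <= y -> ln x <= ln y.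
Proof. intros Hx [H|H]; [left; apply ln_increasing; auto | subst; lra]. Qed.

Lemma nogrowth (E E' : R -> R) beta d X' : proper_error_score E E' ->
  0 < beta < 1 -> 0 < d -> 0 < X' ->
  (forall t, X' <= t -> d * E (beta * t) <= E t) ->
  filterlim (fun x => - ln (E x) / ln x) (Rbar_locally p_infty) (Rbar_locally p_infty) ->
  False.
Proof.
  intros HE Hb Hd HX Hrat Hg.
  destruct HE as [Hder [_ [Hpos [Hneg _]]]].
  set (d' := Rmin d 1).
  assert (Hd'1 : d' <= 1) by apply Rmin_r.
  assert (Hd'0 : 0 < d') by (apply Rmin_pos; lra).
  assert (Hrat' : forall t, X' <= t -> d' * E (beta * t) <= E t).
  { intros t Ht. pose proof (Hrat t Ht). assert (0 < E (beta*t)) by (apply Hpos; nra).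
    pose proof (Rmin_l d 1). fold d' in H1. nra. }
  set (K := - ln d').
  assert (HK : 0 <= K) by (unfold K; pose proof (lnle _ _ Hd'0 Hd'1); rewrite ln_1 in H; lra).
  assert (Hmono : forall x y, X' <= x -> x <= y -> E y <= E x).
  { apply (decr E E' X'); [intros; apply deriv_pos; auto; lra | intros; left; apply Hneg; lra]. }
  set (g := - ln beta).
  assert (Hgam : 0 < g) by (unfold g; pose proof (ln_increasing _ _ (proj1 Hb) (proj2 Hb)); rewrite ln_1 in H; lra).
  set (A := - ln (E (X' / beta))).
  set (B := fun y => A + K * (ln y - ln X') / g).
  assert (HXb : X' <= X' / beta).
  { apply (Rmult_le_reg_l beta); [lra|]. replace (beta * (X'/beta)) with X' by (field; lra). nra. }
  assert (Base : forall y, X' <= y -> y <= X' / beta -> - ln (E y) <= B y).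
  { intros y H1 H2. unfold B.
    assert (- ln (E y) <= A).
    { unfold A. assert (0 < E (X'/beta)) by (apply Hpos; lra).
      pose proof (lnle _ _ H (Hmono _ _ H1 H2)). lra. }
    assert (0 <= K * (ln y - ln X') / g).
    { unfold Rdiv. apply Rmult_le_pos; [apply Rmult_le_pos; [lra|] | left; apply Rinv_0_lt_compat; lra].
      pose proof (lnle _ _ HX H1). lra. }
    lra. }
  assert (Ind : forall n, forall y, X' <= y -> y <= X' / beta ^ (S n) -> - ln (E y) <= B y).
  { induction n as [|n IH]; intros y H1 H2.
    - apply Base; auto. simpl in H2. rewrite Rmult_1_r in H2. auto.
    - destruct (Rle_or_lt y (X'/beta)) as [Hy|Hy]; [apply Base; auto|].
      assert (Hby : X' <= beta * y).
      { assert (beta * (X'/beta) = X') by (field; lra). nra. }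
      assert (Hby2 : beta * y <= X' / beta ^ (S n)).
      { assert (0 < beta ^ S n) by (apply pow_lt; lra).
        assert (beta * (X' / beta ^ (S (S n))) = X' / beta ^ (S n)).
        { simpl. field. split; [|lra]. assert (0 < beta ^ n) by (apply pow_lt; lra). lra. }
        nra. }
      specialize (IH _ Hby Hby2).
      assert (0 < E (beta * y)) by (apply Hpos; lra).
      assert (Hl : ln d' + ln (E (beta * y)) <= ln (E y)).
      { rewrite <- ln_mult by auto. apply lnle; [apply Rmult_lt_0_compat; auto|]. apply Hrat'; lra. }
      assert (HBb : B (beta * y) = B y - K).
      { unfold B, g. rewrite ln_mult by lra. field. unfold g in Hgam. lra. }
      unfold K in HBb. lra. }
  assert (All : forall y, X' <= y -> - ln (E y) <= B y).
  { intros y Hy.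
    assert (Hr1 : Rabs beta < 1) by (rewrite Rabs_pos_eq; lra).
    assert (Hr2 : 0 < X' / y) by (apply Rdiv_lt_0_compat; lra).
    destruct (pow_lt_1_zero beta Hr1 (X'/y) Hr2) as [N HN].
    specialize (HN (S N) ltac:(lia)). rewrite Rabs_pos_eq in HN by (left; apply pow_lt; lra).
    apply (Ind N); auto. assert (0 < beta ^ S N) by (apply pow_lt; lra).
    apply (Rmult_le_reg_r (beta ^ S N)); auto.
    replace (X'/beta^S N * beta^S N) with X' by (field; lra).
    assert (H0 : beta^S N * y < X'/y*y) by (apply Rmult_lt_compat_r; lra).
    replace (X'/y*y) with X' in H0 by (field; lra). lra. }
  set (C0 := A - K * ln X' / g).
  set (M := Rabs C0 + K / g + 1).
  destruct (Hg (fun r => M < r) (ex_intro _ M (fun x H => H))) as [N HN].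
  set (y := Rmax N (Rmax X' (exp 1)) + 1).
  assert (Hy1 : N < y) by (unfold y; pose proof (Rmax_l N (Rmax X' (exp 1))); lra).
  assert (Hy2 : X' <= y) by (unfold y; pose proof (Rmax_r N (Rmax X' (exp 1))); pose proof (Rmax_l X' (exp 1)); lra).
  assert (Hy3 : exp 1 < y) by (unfold y; pose proof (Rmax_r N (Rmax X' (exp 1))); pose proof (Rmax_r X' (exp 1)); lra).
  assert (HL : 1 < ln y) by (rewrite <- (ln_exp 1) at 1; apply ln_increasing; auto; apply exp_pos).
  specialize (HN y Hy1). simpl in HN.
  assert (HM : M * ln y < - ln (E y)).
  { apply (Rmult_lt_compat_r (ln y)) in HN; [|lra].
    replace (- ln (E y) / ln y * ln y) with (- ln (E y)) in HN by (field; lra). exact HN. }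
  specialize (All y Hy2). unfold B in All.
  assert (HB : A + K * (ln y - ln X') / g = C0 + K / g * ln y) by (unfold C0; field; lra).
  rewrite HB in All.
  pose proof (Rle_abs C0). pose proof (Rabs_pos C0).
  assert (Rabs C0 * (ln y - 1) >= 0) by (apply Rle_ge, Rmult_le_pos; lra).
  unfold M in HM. nra.
Qed.

Theorem theorem2 (p alpha : R) (E E' : R -> R)
  (Hp : 0 < p < 1)
  (Halpha : 0 < alpha < p / (1 - p))
  (HE : proper_error_score E E')
  (Hlim1 : ex_lim_pinfty_Rbar (fun x => E' x / E x))
  (Hlim2 : forall a, 0 < a < 1 -> ex_lim_pinfty_Rbar (fun x => E x / E (a * x)))
  (Hlim3 : forall a, 0 < a < 1 -> ex_lim_pinfty_Rbar (fun x => E' x / E' (a * x)))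
  (Hgrowth : filterlim (fun x => - ln (E x) / ln x)
               (Rbar_locally p_infty) (Rbar_locally p_infty)) :
  undulating p alpha E'.
Proof.
  set (beta := alpha * (1 - p) / p).
  assert (Hb : 0 < beta < 1).
  { unfold beta. assert (alpha * (1-p) < p).
    { assert (p / (1-p) * (1-p) = p) by (field; lra). destruct Halpha. nra. }
    split.
    - apply Rdiv_lt_0_compat; [apply Rmult_lt_0_compat|]; lra.
    - apply (Rmult_lt_reg_r p); [lra|]. replace (alpha * (1-p) / p * p) with (alpha*(1-p)) by (field; lra). lra. }
  assert (Hno : ~ exists X, forall t, X < t -> E' t / E' (beta * t) > beta / 2).
  { intros [X HX]. destruct (key E E' beta (beta/2) X HE Hb ltac:(lra) HX) as [X' [HX' Hr]].
    apply (nogrowth E E' beta (beta/2/beta) X' HE Hb); auto.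
    apply Rdiv_lt_0_compat; lra. }
  assert (Hev : exists X, forall t, X < t -> E' t / E' (beta * t) < beta).
  { destruct (Hlim3 beta Hb) as [L HL].
    destruct L as [l| |].
    - destruct (Rlt_or_le l beta) as [Hl|Hl].
      + assert (Hpos : 0 < beta - l) by lra.
        apply (HL (fun r => r < beta)).
        exists (mkposreal _ Hpos). intros r Hr. apply (proj1 (ballR _ _ _)) in Hr.
        simpl in Hr. apply Rabs_lt_between in Hr. lra.
      + exfalso. apply Hno.
        assert (Hpos : 0 < beta / 2) by lra.
        apply (HL (fun r => beta / 2 < r)).
        exists (mkposreal _ Hpos). intros r Hr. apply (proj1 (ballR _ _ _)) in Hr.
        simpl in Hr. apply Rabs_lt_between in Hr. lra.
    - exfalso. apply Hno. apply (HL (fun r => beta / 2 < r)). exists (beta/2). auto.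
    - apply (HL (fun r => r < beta)). exists beta. auto. }
  destruct Hev as [X HX].
  exists 0, (X / p). split.
  - intros m H1 H2. lra.
  - intros m H1 H2.
    assert (Hpm : X < p * m).
    { apply (Rmult_lt_compat_l p) in H2; [|lra]. replace (p * (X/p)) with X in H2 by (field; lra). lra. }
    replace (alpha * (1 - p) * m) with (beta * (p * m)) by (unfold beta; field; lra).
    fold beta. apply HX. auto.
Qed.
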